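(* Let $N\ge 5$ be odd, and let $G_{N,1}$ be the graph with vertex set $\mathbb Z_N$ in which two distinct vertices $i,j$ are adjacent if and only if $j-i\not\equiv\pm1\pmod N$. Put $\Delta=\sqrt{N(N-4)}$ and $\rho=\frac{N-2+\Delta}{2}$. Then $G_{N,1}$ has $m=\frac{N(N-3)}{2}$ edges, and for $u,v\in\mathbb Z_N$ with $q\in\{0,1,\dots,N-1\}$, $q\equiv v-u\pmod N$, the expected hitting time of $v$ by the simple random walk on $G_{N,1}$ started at $u$ is \[ H^{(1)}(u,v)=\frac{N(N-3)}{\Delta(\rho^N+1)}\left\{\rho^N-1+(-1)^q(\rho^q-\rho^{N-q})\right\}. \]
   Context: The simple random walk moves from the current vertex to a uniformly random neighbour; $H(u,v)$ is the expected number of steps to first reach $v$ starting from $u$. *)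

(* Defs.v *)
From HB Require Import structures.
From mathcomp Require Import all_boot all_order all_algebra.
From mathcomp Require Import all_classical all_reals all_analysis.
Set Implicit Arguments. Unset Strict Implicit. Unset Printing Implicit Defensive.
Import Order.TTheory GRing.Theory Num.Theory numFieldNormedType.Exports.
Local Open Scope ring_scope.


(* A simple graph on a finite vertex type T is given by a symmetric irreflexive
   adjacency relation [adj]. *)

Definition graph_edges (T : finType) (adj : rel T) : {set {set T}} :=
  [set e : {set T} | [exists x, exists y, adj x y && (e == [set x; y])]].

Definition deg (T : finType) (adj : rel T) (x : T) : nat := #|[set y | adj x y]|.

Definition srw (R : realType) (T : finType) (adj : rel T) (x y : T) : R :=
  if adj x y then (deg adj x)%:R^-1 else 0.

(* avoid_mass adj u v t x = probability that the walk started at u is at x at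
   time t and has not visited v at any of the times 0, ..., t-1. *)
Fixpoint avoid_mass (R : realType) (T : finType) (adj : rel T) (u v : T)
    (t : nat) (x : T) : R :=
  match t with
  | 0 => (x == u)%:R
  | t'.+1 => \sum_(y : T | y != v) avoid_mass R adj u v t' y * srw R adj y x
  end.

(* First-passage distribution: P_u(T_v = t), where T_v = min {t >= 0 : X_t = v}. *)
Definition first_passage (R : realType) (T : finType) (adj : rel T) (u v : T)
    (t : nat) : R := avoid_mass R adj u v t v.

(* "H is the expected hitting time of v from u": T_v is a.s. finite and
   E[T_v] = sum_t t P(T_v = t) = H. *)
Definition is_hitting_time (R : realType) (T : finType) (adj : rel T) (u v : T)
    (H : R) : Prop :=
  (series (first_passage R adj u v) @ \oo --> (1 : R))%classic /\
  (series (fun t => t%:R * first_passage R adj u v t) @ \oo --> H)%classic.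

Definition GN1 (N : nat) : rel 'I_N :=
  fun i j => [&& i != j, ((nat_of_ord j + N - nat_of_ord i) %% N)%N != 1%N & ((nat_of_ord i + N - nat_of_ord j) %% N)%N != 1%N].
Arguments GN1 N : clear implicits.

(* Main.v *)
Require Import Defs.
From HB Require Import structures.
From mathcomp Require Import all_boot all_order all_algebra.
From mathcomp Require Import all_classical all_reals all_analysis.
From mathcomp Require Import ring lra zify.
Import Order.TTheory GRing.Theory Num.Theory numFieldNormedType.Exports.

Lemma modc2 a N : (N <= a)%N -> (a < N + N)%N -> a %% N = (a - N)%N.
Proof.
move=> h1 h2.
have -> : a = (a - N) + N by lia.
by rewrite modnDr addnK modn_small //; lia.
Qed.

Ltac nomod a := match a with context [_ %% _] => fail 1 | _ => idtac end.
Ltac kill_mod := repeat match goal with |- context [?a %% ?n] =>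
   nomod a; let h := fresh in case: (ltnP a n) => h;
   [rewrite (modn_small h) | rewrite (@modc2 a n h); last lia] end.

Lemma q_S (x v N : nat) : (2 < N)%N -> (x < N)%N -> (v < N)%N ->
  ((v + N - (x.+1 %% N)) %% N =
   if x == v then N - 1 else ((v + N - x) %% N).-1)%N.
Proof.
move=> N2 xN vN; kill_mod; case: eqP; lia.
Qed.

Lemma q_P (x v N : nat) : (2 < N)%N -> (x < N)%N -> (v < N)%N ->
  ((v + N - ((x + N).-1 %% N)) %% N =
   if x == v then 1 else if ((v + N - x) %% N == N - 1) then 0 else ((v + N - x) %% N).+1)%N.
Proof.
move=> N2 xN vN; kill_mod; case: eqP; try case: eqP; lia.
Qed.

Lemma q_self v N : (v < N)%N -> ((v + N - v) %% N = 0)%N.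
Proof. by move=> h; rewrite addKn modnn. Qed.

Lemma q_range x v N : (x < N)%N -> (v < N)%N -> x != v ->
  (0 < (v + N - x) %% N < N)%N.
Proof. move=> xN vN /eqP xv; kill_mod; lia. Qed.

Lemma adjS (x y N : nat) : (2 < N)%N -> (x < N)%N -> (y < N)%N ->
  (((y + N - x) %% N)%N == 1%N) = (y == x.+1 %% N).
Proof.
move=> N2 xN yN; apply/idP/idP => /eqP; kill_mod; move=> Hq; apply/eqP; lia.
Qed.

Lemma adjP (x y N : nat) : (2 < N)%N -> (x < N)%N -> (y < N)%N ->
  (((x + N - y) %% N)%N == 1%N) = (y == (x + N).-1 %% N).
Proof.
move=> N2 xN yN; apply/idP/idP => /eqP; kill_mod; move=> Hq; apply/eqP; lia.
Qed.

Lemma distinct3 (x N : nat) : (2 < N)%N -> (x < N)%N ->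
  [/\ x != x.+1 %% N, x != (x + N).-1 %% N & x.+1 %% N != (x + N).-1 %% N].
Proof.
move=> N2 xN; split; apply/eqP; kill_mod; lia.
Qed.

Local Open Scope ring_scope.
Set Implicit Arguments. Unset Strict Implicit.
Lemma am_ge0 (R : realType) (T : finType) (adj : rel T) u v t x :
  0 <= avoid_mass R adj u v t x.
Proof.
elim: t x => [|t IH] x /=; first by rewrite ler0n.
apply: sumr_ge0 => y _; apply: mulr_ge0 => //.
by rewrite /srw; case: ifP => // _; rewrite invr_ge0 ler0n.
Qed.

Lemma srw_ge0 (R : realType) (T : finType) (adj : rel T) x y :
  0 <= srw R adj x y.
Proof. by rewrite /srw; case: ifP => // _; rewrite invr_ge0 ler0n. Qed.

Lemma srw_sum1 (R : realType) (T : finType) (adj : rel T) y :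
  (0 < deg adj y)%N -> \sum_x srw R adj y x = 1.
Proof.
move=> hd; rewrite /srw -big_mkcond /=; move: hd; rewrite /deg => hd.
transitivity (\sum_(x in [set z | adj y z]) (deg adj y)%:R^-1 : R).
  by apply: eq_bigl => x; rewrite inE.
by rewrite sumr_const -(mulr_natr _ #|[set z | adj y z]|) /deg mulVf // pnatr_eq0 -lt0n.
Qed.

Definition Sm (R : realType) (T : finType) (adj : rel T) u v t : R :=
  \sum_(x | x != v) avoid_mass R adj u v t x.
Definition Phi (R : realType) (T : finType) (adj : rel T) u v (h : T -> R) t : R :=
  \sum_(x | x != v) avoid_mass R adj u v t x * h x.
Arguments Phi R {T} adj u v h t.

Lemma sum_next (R : realType) (T : finType) (adj : rel T) u v t :
  (forall y, (0 < deg adj y)%N) ->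
  \sum_x avoid_mass R adj u v t.+1 x = Sm R adj u v t.
Proof.
move=> hd; rewrite /= exchange_big /=; apply: eq_bigr => y _.
by rewrite -mulr_sumr srw_sum1 // mulr1.
Qed.

Lemma S_step (R : realType) (T : finType) (adj : rel T) u v t :
  (forall y, (0 < deg adj y)%N) ->
  Sm R adj u v t.+1 + first_passage R adj u v t.+1 = Sm R adj u v t.
Proof.
move=> hd; rewrite -[RHS]sum_next // (bigD1 v) //= addrC.
by rewrite /first_passage /Sm.
Qed.

Lemma S_0 (R : realType) (T : finType) (adj : rel T) u v :
  Sm R adj u v 0 + first_passage R adj u v 0 = 1.
Proof.
have -> : 1 = \sum_x avoid_mass R adj u v 0 x.
  by rewrite /= (bigD1 u) //= eqxx big1 ?addr0 // => x /negbTE ->.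
by rewrite (bigD1 v) //= addrC.
Qed.

Lemma Phi_step (R : realType) (T : finType) (adj : rel T) u v (h : T -> R) t :
  (forall y, (0 < deg adj y)%N) -> h v = 0 ->
  (forall x, x != v -> h x = 1 + \sum_y srw R adj x y * h y) ->
  Phi R adj u v h t.+1 = Phi R adj u v h t - Sm R adj u v t.
Proof.
move=> hd hv heq.
have -> : Phi R adj u v h t.+1 = \sum_x avoid_mass R adj u v t.+1 x * h x.
  by rewrite [RHS](bigD1 v) //= hv mulr0 add0r.
rewrite /=.
under eq_bigr do rewrite mulr_suml.
rewrite exchange_big /= /Phi /Sm -sumrB; apply: eq_bigr => y hy.
under eq_bigr do rewrite -mulrA.
by rewrite -mulr_sumr (heq y hy); ring.
Qed.

Lemma h_ge1 (R : realType) (T : finType) (adj : rel T) v (h : T -> R) x :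
  (forall x, 0 <= h x) ->
  (forall x, x != v -> h x = 1 + \sum_y srw R adj x y * h y) ->
  x != v -> 1 <= h x.
Proof.
move=> h0 heq xv; rewrite (heq x xv) lerDl; apply: sumr_ge0 => y _.
exact: mulr_ge0 (srw_ge0 _ _ _ _) (h0 y).
Qed.

Lemma Sm_ge0 (R : realType) (T : finType) (adj : rel T) u v t :
  0 <= Sm R adj u v t.
Proof. by apply: sumr_ge0 => x _; apply: am_ge0. Qed.

Lemma Sm_le_Phi (R : realType) (T : finType) (adj : rel T) u v (h : T -> R) t :
  (forall x, 0 <= h x) ->
  (forall x, x != v -> h x = 1 + \sum_y srw R adj x y * h y) ->
  Sm R adj u v t <= Phi R adj u v h t.
Proof.
move=> h0 heq; apply: ler_sum => x xv.
by rewrite ler_peMr ?am_ge0 // (h_ge1 h0 heq xv).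
Qed.

Lemma Phi_le (R : realType) (T : finType) (adj : rel T) u v (h : T -> R) t :
  (forall x, 0 <= h x) ->
  Phi R adj u v h t <= (1 + \sum_x h x) * Sm R adj u v t.
Proof.
move=> h0; rewrite mulr_sumr; apply: ler_sum => x xv.
rewrite [X in _ <= X]mulrC ler_wpM2l ?am_ge0 //.
rewrite (bigD1 x) //=; have : 0 <= \sum_(i | i != x) h i by apply: sumr_ge0.
lra.
Qed.

Lemma Phi_0 (R : realType) (T : finType) (adj : rel T) u v (h : T -> R) :
  h v = 0 -> Phi R adj u v h 0 = h u.
Proof.
move=> hv.
have -> : Phi R adj u v h 0 = \sum_x avoid_mass R adj u v 0 x * h x.
  by rewrite [RHS](bigD1 v) //= hv mulr0 add0r.
rewrite (bigD1 u) //= eqxx mul1r big1 ?addr0 // => x /negbTE -> .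
by rewrite mul0r.
Qed.

Lemma ps1 (R : realType) (T : finType) (adj : rel T) u v n :
  (forall y, (0 < deg adj y)%N) ->
  series (first_passage R adj u v) n.+1 = 1 - Sm R adj u v n.
Proof.
move=> hd; rewrite /series /=.
elim: n => [|n IH].
  by rewrite big_nat1 -(S_0 R adj u v); ring.
rewrite big_nat_recr //= IH -(@S_step R T adj u v n hd).
by ring.
Qed.

Lemma ps2 (R : realType) (T : finType) (adj : rel T) u v (h : T -> R) n :
  (forall y, (0 < deg adj y)%N) -> h v = 0 ->
  (forall x, x != v -> h x = 1 + \sum_y srw R adj x y * h y) ->
  series (fun t => t%:R * first_passage R adj u v t) n.+1 =
    h u - Phi R adj u v h n - n%:R * Sm R adj u v n.
Proof.
move=> hd hv heq; rewrite /series /=.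
elim: n => [|n IH].
  by rewrite big_nat1 Phi_0 // !mul0r subrr !subr0.
rewrite big_nat_recr //= IH Phi_step //.
have := @S_step R T adj u v n hd; rewrite /Sm => <-.
rewrite -/(Sm R adj u v n.+1) -addn1 natrD.
ring.
Qed.

Lemma ntheta (R : realType) (th : R) : 0 <= th -> th < 1 ->
  ((fun n => n%:R * th ^+ n) @ \oo --> (0 : R))%classic.
Proof.
move=> th0 th1.
set s := Num.sqrt th.
have s0 : 0 <= s := sqrtr_ge0 _.
have s1 : s < 1 by rewrite /s -sqrtr1 ltr_sqrt.
have ths : th = s ^+ 2 by rewrite sqr_sqrtr.
have key : forall n, s ^+ n * (n%:R * (1 - s)) <= 1.
  elim=> [|n IH]; first by rewrite mul0r mulr0 ler01.
  have p0 : 0 <= s ^+ n := exprn_ge0 n s0.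
  have p1 : s ^+ n <= 1 := exprn_ile1 n s0 (ltW s1).
  have n0 : 0 <= n%:R :> R := ler0n _ _.
  rewrite exprS -[n.+1]addn1 natrD.
  move: IH p0 p1 n0; set p := s ^+ n; set q := (n%:R : R) => IH p0 p1 n0.
  have h1 : s * (p * (q * (1 - s))) <= s * 1 by rewrite ler_wpM2l.
  have h2 : (s * p) * (1 - s) <= 1 * (1 - s).
    by rewrite ler_wpM2r ?subr_ge0 ?(ltW s1) // mulr_ile1 // ltW.
  nra.
apply: (squeeze_cvgr (f := fun _ => 0) (h := fun n => s ^+ n * (1 - s)^-1)).
- apply: nearW => n /=.
  have p0 : 0 <= s ^+ n := exprn_ge0 n s0.
  have n0 : 0 <= n%:R :> R := ler0n _ _.
  rewrite mulr_ge0 //=; last by rewrite ths exprn_ge0 // sqr_ge0.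
  rewrite ths -exprM mulnC exprM.
  have := key n; move: p0 n0; set p := s ^+ n; set q := (n%:R : R) => p0 n0 k.
  rewrite ler_pdivlMr ?subr_gt0 //.
  have hh : p * (p * (q * (1 - s))) <= p * 1 by rewrite ler_wpM2l.
  rewrite mulr1 in hh; apply: le_trans hh; rewrite le_eqVlt; apply/orP; left; apply/eqP.
  ring.
- exact: cvg_cst.
- have hs : `|s| < 1 by rewrite ger0_norm.
  have := @cvgMr_tmp _ _ _ _ (fun n => s ^+ n) 0 (1 - s)^-1 (cvg_expr hs).
  rewrite mul0r => H; apply: H.
Qed.

Lemma hitting_gen (R : realType) (T : finType) (adj : rel T) u v (h : T -> R) :
  (forall y, (0 < deg adj y)%N) -> h v = 0 -> (forall x, 0 <= h x) ->
  (forall x, x != v -> h x = 1 + \sum_y srw R adj x y * h y) ->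
  @is_hitting_time R T adj u v (h u).
Proof.
move=> hd hv h0 heq.
set M := 1 + \sum_x h x.
have M1 : 1 <= M by rewrite /M lerDl sumr_ge0.
have M0 : 0 < M by apply: lt_le_trans M1.
set th := 1 - M^-1.
have th0 : 0 <= th by rewrite /th subr_ge0 invf_le1.
have th1 : th < 1 by rewrite /th ltrBlDr ltrDl invr_gt0.
have hu0 := h0 u.
have geo : forall n, Phi R adj u v h n <= th ^+ n * h u.
  elim=> [|n IH]; first by rewrite Phi_0 // expr0 mul1r.
  rewrite Phi_step // exprS -mulrA.
  have hP := @Phi_le R T adj u v h n h0.
  have hS : Phi R adj u v h n / M <= Sm R adj u v n.
    by rewrite ler_pdivrMr // mulrC.
  have : th * Phi R adj u v h n <= th * (th ^+ n * h u) by rewrite ler_wpM2l.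
  have -> : th * Phi R adj u v h n = Phi R adj u v h n - Phi R adj u v h n / M.
    by rewrite /th; ring.
  move=> hh; apply: le_trans hh; lra.
have SP n := @Sm_le_Phi R T adj u v h n h0 heq.
have S0 n := @Sm_ge0 R T adj u v n.
split.
- rewrite -cvg_shiftS.
  apply: (squeeze_cvgr (f := fun n => 1 - th ^+ n * h u) (h := fun _ => 1)).
  + apply: nearW => n /=; rewrite ps1 //.
    have := geo n; have := SP n; have := S0 n.
    move=> a b c; apply/andP; split; lra.
  + have hs : `|th| < 1 by rewrite ger0_norm.
    have := cvgB (cvg_cst (1 : R)) (cvgMr_tmp (b := h u) (cvg_expr hs)).
    by rewrite mul0r subr0 => H; apply: H.
  + exact: cvg_cst.
- rewrite -cvg_shiftS.
  apply: (squeeze_cvgr (f := fun n => h u - (n%:R * th ^+ n + th ^+ n) * h u)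
            (h := fun _ => h u)).
  + apply: nearW => n /=; rewrite (@ps2 R T adj u v h n) //.
    have := geo n; have := SP n; have := S0 n.
    have n0 : 0 <= n%:R :> R := ler0n _ _.
    move=> a b c.
    have d : n%:R * Sm R adj u v n <= n%:R * (th ^+ n * h u).
      by rewrite ler_wpM2l // (le_trans b c).
    have e : 0 <= n%:R * Sm R adj u v n by rewrite mulr_ge0.
    apply/andP; split; nra.
  + have hs : `|th| < 1 by rewrite ger0_norm.
    have := cvgB (cvg_cst (h u))
      (cvgMr_tmp (b := h u) (cvgD (ntheta th0 th1) (cvg_expr hs))).
    by rewrite addr0 mul0r subr0 => H; apply: H.
  + exact: cvg_cst.
Qed.

Lemma GN1E N (x y : 'I_N) : (2 < N)%N ->
  GN1 N x y = [&& y != x, y != ordS x & y != ord_pred x].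
Proof.
move=> N2; rewrite /GN1 adjS // adjP // eq_sym.
by rewrite -!(inj_eq val_inj).
Qed.

Lemma distinct3_ord N (x : 'I_N) : (2 < N)%N ->
  [/\ ordS x != x, ord_pred x != x & ord_pred x != ordS x].
Proof.
move=> N2; case: (@distinct3 x N N2 (ltn_ord x)) => a b c.
by rewrite -!(inj_eq val_inj) /= eq_sym a eq_sym b eq_sym c.
Qed.

Lemma sum_split3 (R : realType) N (x : 'I_N) (F : 'I_N -> R) : (2 < N)%N ->
  \sum_y F y = F x + F (ordS x) + F (ord_pred x) + \sum_(y | GN1 N x y) F y.
Proof.
move=> N2; case: (distinct3_ord x N2) => a b c.
rewrite (bigD1 x) //= (bigD1 (ordS x)) //= (bigD1 (ord_pred x)) /=; last by rewrite b c.
rewrite !addrA; congr (_ + _); apply: eq_bigl => y.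
by rewrite GN1E // andbA.
Qed.

Lemma deg_GN1 N (x : 'I_N) : (2 < N)%N -> deg (GN1 N) x = (N - 3)%N.
Proof.
move=> N2; case: (distinct3_ord x N2) => a b c; rewrite /deg.
have -> : [set y | GN1 N x y] = ~: [set x; ordS x; ord_pred x].
  apply/setP => y; rewrite !inE GN1E //.
  by case: (y == x); case: (y == ordS x); case: (y == ord_pred x).
have := cardsC [set x; ordS x; ord_pred x]; rewrite card_ord.
rewrite finset.setUC cardsU1 cards2 !inE (negbTE b) (negbTE c) (eq_sym x) a /=.
lia.
Qed.

Definition Fh (R : realType) (N : nat) (Delta rho : R) (q : nat) : R :=
  (N * (N - 3))%:R / (Delta * (rho ^+ N + 1)) *
        (rho ^+ N - 1 + (-1) ^+ q * (rho ^+ q - rho ^+ (N - q))).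

Lemma rho_facts (R : realType) N : (5 <= N)%N ->
  let Delta : R := Num.sqrt (N%:R * (N%:R - 4)) in
  let rho : R := (N%:R - 2 + Delta) / 2 in
  [/\ 0 < Delta, 1 <= rho, rho ^+ 2 - (N%:R - 2) * rho + 1 = 0 &
      Delta = 2 * rho - (N%:R - 2)].
Proof.
move=> hN Delta rho.
have N5 : 5 <= N%:R :> R by rewrite (ler_nat R 5 N).
have p0 : 0 < N%:R * (N%:R - 4) :> R by apply: mulr_gt0; lra.
have D0 : 0 < Delta by rewrite /Delta sqrtr_gt0.
have D2 : Delta ^+ 2 = N%:R * (N%:R - 4) by rewrite /Delta sqr_sqrtr // ltW.
split => //.
- rewrite /rho; lra.
- rewrite /rho; nra.
- rewrite /rho; lra.
Qed.

Lemma F0 (R : realType) N (Delta rho : R) : Fh N Delta rho 0 = 0.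
Proof. rewrite /Fh subn0 expr0 expr0 mul1r; ring. Qed.

Lemma FN (R : realType) N (Delta rho : R) : odd N -> Fh N Delta rho N = 0.
Proof.
move=> o; rewrite /Fh subnn expr0 -signr_odd o expr1; ring.
Qed.

Lemma Fge0 (R : realType) N (Delta rho : R) q : 0 < Delta -> 1 <= rho ->
  (q <= N)%N -> 0 <= Fh N Delta rho q.
Proof.
move=> D0 r1 qN; rewrite /Fh.
have r0 : 0 <= rho by lra.
have A0 : 0 <= (N * (N - 3))%:R / (Delta * (rho ^+ N + 1)).
  apply: divr_ge0 => //; apply: mulr_ge0; [exact: ltW | apply: addr_ge0 => //; exact: exprn_ge0].
apply: mulr_ge0 => //.
have -> : rho ^+ N = rho ^+ q * rho ^+ (N - q) by rewrite -exprD subnKC.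
have a1 : 1 <= rho ^+ q by rewrite exprn_ege1.
have b1 : 1 <= rho ^+ (N - q) by rewrite exprn_ege1.
move: a1 b1; set a := rho ^+ q; set b := rho ^+ (N - q) => a1 b1.
rewrite -signr_odd; case: (odd q); rewrite ?expr1 ?expr0; nra.
Qed.

Lemma alg_rec (R : realType) (n A K rho a b s : R) :
  rho ^+ 2 - (n - 2) * rho + 1 = 0 ->
  A * (K + s * (a * rho ^+ 2 - b)) + (n - 2) * (A * (K + (- s) * (a * rho - b * rho)))
  + A * (K + s * (a - b * rho ^+ 2)) = n * A * K.
Proof.
move=> Q; apply/eqP; rewrite -subr_eq0; apply/eqP.
transitivity (A * s * (a - b) * (rho ^+ 2 - (n - 2) * rho + 1)); first by ring.
by rewrite Q mulr0.
Qed.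

Lemma Frec (R : realType) N (Delta rho : R) q :
  rho ^+ 2 - (N%:R - 2) * rho + 1 = 0 -> (0 < q)%N -> (q < N)%N ->
  Fh N Delta rho q.+1 + (N%:R - 2) * Fh N Delta rho q + Fh N Delta rho q.-1 =
  N%:R * ((N * (N - 3))%:R / (Delta * (rho ^+ N + 1))) * (rho ^+ N - 1).
Proof.
move=> Q; case: q => // k _ kN /=.
set m := (N - k.+2)%N.
have e1 : (N - k.+1 = m.+1)%N by rewrite /m; lia.
have e2 : (N - k = m.+2)%N by rewrite /m; lia.
rewrite /Fh e1 e2 -/m.
set A := (_ / _).
have -> : (-1) ^+ k.+2 = (-1) ^+ k :> R by rewrite !exprS; ring.
have -> : (-1) ^+ k.+1 = - (-1) ^+ k :> R by rewrite exprS mulN1r.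
have -> : rho ^+ k.+2 = rho ^+ k * rho ^+ 2 by rewrite -exprD addn2.
have -> : rho ^+ k.+1 = rho ^+ k * rho by rewrite exprSr.
have -> : rho ^+ m.+2 = rho ^+ m * rho ^+ 2 by rewrite -exprD addn2.
have -> : rho ^+ m.+1 = rho ^+ m * rho by rewrite exprSr.
exact: alg_rec.
Qed.

Lemma alg_sum (R : realType) (n A rho P Dl S : R) : n != 0 ->
  Dl = 2 * rho - (n - 2) -> rho ^+ 2 - (n - 2) * rho + 1 = 0 ->
  A * (Dl * (rho * P + 1)) = n * (n - 3) ->
  n * S = (n - 1) * (n * A * (rho * P - 1)) + A * (rho * P - 1 + 1 * (P - rho))
          + A * (rho * P - 1 + (-1) * (rho - P)) ->
  S = n * A * (rho * P - 1) - (n - 3).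
Proof.
move=> n0 DE Q HA HS; apply: (mulfI n0); rewrite HS.
have -> : n * (n * A * (rho * P - 1) - (n - 3)) =
  n * n * A * (rho * P - 1) - n * (n - 3) by ring.
rewrite -HA DE.
apply/eqP; rewrite -subr_eq0; apply/eqP.
transitivity (2 * A * P * (rho ^+ 2 - (n - 2) * rho + 1)); first by ring.
by rewrite Q mulr0.
Qed.

Lemma Fsum (R : realType) N (Delta rho S : R) : (5 <= N)%N -> odd N ->
  0 < Delta -> 1 <= rho -> rho ^+ 2 - (N%:R - 2) * rho + 1 = 0 ->
  Delta = 2 * rho - (N%:R - 2) ->
  N%:R * S = (N%:R - 1) * (N%:R * ((N * (N - 3))%:R / (Delta * (rho ^+ N + 1))) * (rho ^+ N - 1))
     + Fh N Delta rho (N - 1) + Fh N Delta rho 1 ->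
  S = N%:R * ((N * (N - 3))%:R / (Delta * (rho ^+ N + 1))) * (rho ^+ N - 1) - (N%:R - 3).
Proof.
move=> hN hodd D0 r1 Q DE.
have eN : N = (N - 1).+1 by lia.
have o : odd (N - 1) = false.
  by rewrite oddB ?hodd //; lia.
have eP : rho ^+ N = rho * rho ^+ (N - 1) by rewrite {1}eN exprS.
have e1 : (N - (N - 1) = 1)%N by lia.
rewrite /Fh e1 -signr_odd o /= expr0 expr1 eP.
set P := rho ^+ (N - 1).
set A := (_ / _).
have P0 : 0 <= P by rewrite exprn_ge0 //; lra.
have n0 : N%:R != 0 :> R by rewrite pnatr_eq0; lia.
apply: alg_sum => //.
rewrite -DE /A divfK; last first.
  rewrite mulf_neq0 //; first by rewrite gt_eqF.
  have : 0 <= rho * P by rewrite mulr_ge0 //; lra.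
  move=> h; apply/eqP; lra.
rewrite natrM natrB //; lia.
Qed.

Lemma set2_eq (T : finType) (x y a b : T) : x != y ->
  ([set x; y] == [set a; b]) = ((x, y) == (a, b)) || ((x, y) == (b, a)).
Proof.
move=> xy; apply/idP/idP.
- move/eqP/setP => E.
  have hx : (x == a) || (x == b) by rewrite -in_set2 -E set21.
  have hy : (y == a) || (y == b) by rewrite -in_set2 -E set22.
  have ha : (a == x) || (a == y) by rewrite -in_set2 E set21.
  rewrite !xpair_eqE.
  case: (eqVneq x a) hx => [xa _ | xa /= xb].
    subst x; rewrite /=.
    case/orP: hy => /eqP yv; last by rewrite yv eqxx.
    by rewrite yv eqxx in xy.
  move/eqP: xb => xb; subst x; rewrite eqxx /=.
  case/orP: ha => /eqP av; first by rewrite av eqxx in xa.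
  by rewrite av eqxx.
- by case/orP => /eqP [-> ->] //; rewrite finset.setUC.
Qed.

Lemma handshake (T : finType) (adj : rel T) : symmetric adj -> irreflexive adj ->
  (#|graph_edges adj| * 2 = \sum_x deg adj x)%N.
Proof.
move=> sym irr.
have L : (\sum_x deg adj x = \sum_(p | adj p.1 p.2) 1)%N.
  rewrite -(pair_big_dep xpredT (fun x y => adj x y) (fun _ _ => 1%N)) /=.
  apply: eq_bigr => x _; rewrite /deg -sum1_card; apply: eq_bigl => y; rewrite inE.
  done.
rewrite L (partition_big (fun p => [set p.1; p.2]) (mem (graph_edges adj))) /=; last first.
  move=> [p1 p2] /= H; rewrite inE; apply/existsP; exists p1; apply/existsP; exists p2.
  by rewrite H eqxx.
rewrite -sum_nat_const; apply: eq_bigr => e.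
rewrite inE => /existsP [a /existsP [b /andP [ab /eqP ->]]].
have anb : a != b by apply: contraTneq ab => ->; rewrite irr.
transitivity (\sum_(p in pred2 (a, b) (b, a)) 1)%N.
  by rewrite sum1_card card2 xpair_eqE negb_and anb.
apply: eq_bigl => [[p1 p2]] /=; rewrite !inE.
case H : (adj p1 p2) => /=.
  rewrite set2_eq //; apply: contraTneq H => ->; rewrite irr.
  by [].
apply/negbTE; rewrite negb_or; apply/andP; split; apply/eqP => -[E1 E2]; subst.
  by rewrite ab in H.
by rewrite sym ab in H.
Qed.

Lemma edges_GN1 N : (5 <= N)%N -> #|graph_edges (GN1 N)| = (N * (N - 3) %/ 2)%N.
Proof.
move=> hN.
have sym : symmetric (GN1 N).
  move=> x y; rewrite /GN1 eq_sym; congr andb; rewrite andbC //.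
have irr : irreflexive (GN1 N) by move=> x; rewrite /GN1 eqxx.
have := handshake sym irr.
rewrite (eq_bigr (fun _ => N - 3)%N); last by move=> x _; rewrite deg_GN1 //; lia.
rewrite sum_nat_const card_ord => <-.
by rewrite mulnK.
Qed.

Lemma hit_main (R : realType) (N : nat) (hN : (5 <= N)%N) (hodd : odd N) (u v : 'I_N) :
  let Delta : R := Num.sqrt (N%:R * (N%:R - 4)) in
  let rho : R := (N%:R - 2 + Delta) / 2 in
  @is_hitting_time R _ (GN1 N) u v (Fh N Delta rho ((v + N - u) %% N)).
Proof.
move=> Delta rho.
have [D0 r1 Q DE] : [/\ 0 < Delta, 1 <= rho, rho ^+ 2 - (N%:R - 2) * rho + 1 = 0 &
      Delta = 2 * rho - (N%:R - 2)] := rho_facts R hN.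
have N2 : (2 < N)%N by lia.
pose h := fun x : 'I_N => Fh N Delta rho ((v + N - x) %% N).
set C := N%:R * ((N * (N - 3))%:R / (Delta * (rho ^+ N + 1))) * (rho ^+ N - 1).
have hv : h v = 0 by rewrite /h q_self // F0.
have hS x : x != v -> h (ordS x) = Fh N Delta rho ((v + N - x) %% N).-1.
  by move=> xv; rewrite /h /= q_S // (negbTE xv : (nat_of_ord x == nat_of_ord v) = false).
have hP x : x != v -> h (ord_pred x) = Fh N Delta rho ((v + N - x) %% N).+1.
  move=> xv; rewrite /h /= q_P // (negbTE xv : (nat_of_ord x == nat_of_ord v) = false).
  case: eqP => // ->; rewrite F0 -(@FN R N Delta rho hodd); congr Fh; lia.
have hSv : h (ordS v) = Fh N Delta rho (N - 1) by rewrite /h /= q_S // eqxx.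
have hPv : h (ord_pred v) = Fh N Delta rho 1 by rewrite /h /= q_P // eqxx.
have hrec x : x != v -> h (ord_pred x) + (N%:R - 2) * h x + h (ordS x) = C.
  move=> xv; rewrite hP // hS //.
  have /andP[q0 qN] := @q_range x v N (ltn_ord x) (ltn_ord v) xv.
  exact: Frec.
have hsum : \sum_x h x = C - (N%:R - 3).
  apply: Fsum => //.
  have E1 : \sum_x (h (ord_pred x) + (N%:R - 2) * h x + h (ordS x)) = N%:R * \sum_x h x.
    rewrite !big_split /=.
    have rr1 : \sum_x h (ord_pred x) = \sum_x h x.
      by rewrite [RHS](reindex_inj (@ord_pred_inj N)).
    have rr2 : \sum_x h (ordS x) = \sum_x h x.
      by rewrite [RHS](reindex_inj (@ordS_inj N)).
    rewrite rr1 rr2.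
    rewrite -[\sum_x (N%:R - 2) * h x]mulr_sumr.
    ring.
  rewrite -E1 (bigD1 v) //= hv mulr0 addr0 hSv hPv.
  rewrite (eq_bigr (fun _ => C)); last by move=> x xv; rewrite hrec.
  have : \sum_(x : 'I_N) C = C + \sum_(x | x != v) C by rewrite (bigD1 v).
  rewrite sumr_const card_ord => E2.
  have -> : \sum_(x | x != v) C = C *+ N - C by rewrite E2; ring.
  rewrite -mulr_natr /C; ring.
apply: (@hitting_gen R _ (GN1 N) u v h).
- by move=> y; rewrite deg_GN1 //; lia.
- exact: hv.
- move=> x; apply: Fge0 => //; apply: ltnW; apply: ltn_pmod; lia.
- move=> x xv.
  have -> : \sum_y srw R (GN1 N) x y * h y = (N%:R - 3)^-1 * \sum_(y | GN1 N x y) h y.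
    rewrite mulr_sumr [RHS]big_mkcond /=; apply: eq_bigr => y _; rewrite /srw deg_GN1 // natrB //.
    by case: ifP; rewrite ?mul0r ?mulr0.
  have := @sum_split3 R N x h N2; rewrite hsum => E.
  have -> : \sum_(y | GN1 N x y) h y = C - (N%:R - 3) - (h x + h (ordS x) + h (ord_pred x)).
    by rewrite E; ring.
  have := hrec x xv => H.
  have n3 : N%:R - 3 != 0 :> R.
    have : 5 <= N%:R :> R by rewrite (ler_nat R 5 N).
    move=> h5; apply/eqP; lra.
  have -> : C = h (ord_pred x) + (N%:R - 2) * h x + h (ordS x) by rewrite H.
  by field.
Qed.


Theorem corollary4p2 (R : realType) (N : nat) (hN : (5 <= N)%N) (hodd : odd N) :
  let Delta : R := Num.sqrt (N%:R * (N%:R - 4)) in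
  let rho : R := (N%:R - 2 + Delta) / 2 in
  #|graph_edges (GN1 N)| = (N * (N - 3) %/ 2)%N /\
  forall u v : 'I_N,
    let q := ((nat_of_ord v + N - nat_of_ord u) %% N)%N in
    @is_hitting_time R _ (GN1 N) u v
      ((N * (N - 3))%:R / (Delta * (rho ^+ N + 1)) *
        (rho ^+ N - 1 + (-1) ^+ q * (rho ^+ q - rho ^+ (N - q)))).
Proof.
move=> Delta rho; split; first exact: edges_GN1.
move=> u v q; exact: (@hit_main R N hN hodd u v).
Qed.
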